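(* Let $d,k\in\mathbb{N}$ with $k\ge2$ and $d>2k$, and put $n=d-2k$. Let $\phi=\alpha\phi_1+\beta\phi_2$ with $\alpha,\beta>0$. Then every point $\mathbf{z}\in\Lambda_1$ with $\phi[\mathbf{z}]=\min\{\phi[\mathbf{u}]:\mathbf{u}\in\Lambda_1\}$ satisfies $|\mathbf{z}\cdot\mathbf{j}|\le\frac dn$; and if such a minimal $\mathbf{z}$ satisfies $|\mathbf{z}\cdot\mathbf{j}|=\frac dn$, then $\mathbf{z}\in\{\frac{\mathbf{j}}{n},-\frac{\mathbf{j}}{n}\}$.
   Context: $\mathbf{e}_1,\dots,\mathbf{e}_d$ is the standard basis of $\mathbb{R}^d$, $\mathbf{j}=(1,\dots,1)$. $L^1$ is the set of vectors in $\mathbb{Z}^d$ with $k$ coordinates $-1$ and $d-k$ coordinates $1$; $\Lambda$ is the $\mathbb{Z}$-span of $\mathbf{e}_1,\dots,\mathbf{e}_d,\frac{\mathbf{j}}{n}$; $\Lambda_1=\{\mathbf{z}\in\Lambda:\ \mathbf{z}\cdot\boldsymbol{\ell}\equiv1\pmod2\ \forall\boldsymbol{\ell}\in L^1\}$. $\phi_1[\mathbf{x}]=(\sum_ix_i)^2$, $\phi_2[\mathbf{x}]=\bigl|\mathbf{x}-\frac{\sum_ix_i}{d}\mathbf{j}\bigr|^2$. *)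

(* Defs.v *)
From HB Require Import structures.
From mathcomp Require Import all_boot all_order all_algebra.
From mathcomp Require Import reals.
Set Implicit Arguments. Unset Strict Implicit. Unset Printing Implicit Defensive.
Import Order.TTheory GRing.Theory Num.Theory.
Local Open Scope ring_scope.

Section Defs.
Variable R : realType.

Definition jv (d : nat) : 'rV[R]_d := const_mx 1.

Definition dotv (d : nat) (u v : 'rV[R]_d) : R := \sum_(i < d) u 0 i * v 0 i.

Definition inL1 (d k : nat) (l : 'rV[R]_d) : Prop :=
  (forall i, l 0 i = 1 \/ l 0 i = -1) /\ #|[set i | l 0 i == -1]| = k.

Definition inLam (d n : nat) (z : 'rV[R]_d) : Prop :=
  exists (m : 'I_d -> int) (t : int),
    z = \row_(i < d) ((m i)%:~R + t%:~R * (n%:R)^-1 * jv d 0 i).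

Definition inLam1 (d k n : nat) (z : 'rV[R]_d) : Prop :=
  inLam n z /\
  forall l : 'rV[R]_d, inL1 k l -> exists q : int, dotv z l = (2 * q + 1)%:~R.

Definition phi1 (d : nat) (x : 'rV[R]_d) : R := (\sum_(i < d) x 0 i) ^+ 2.

Definition phi2 (d : nat) (x : 'rV[R]_d) : R :=
  let w := x - ((\sum_(i < d) x 0 i) / d%:R) *: jv d in dotv w w.

Definition phi (d : nat) (a b : R) (x : 'rV[R]_d) : R := a * phi1 x + b * phi2 x.

End Defs.

(* Main.v *)
Require Import Defs.
From HB Require Import structures.
From mathcomp Require Import all_boot all_order all_algebra.
From mathcomp Require Import reals.
From mathcomp Require Import ring lra.
Import Order.TTheory GRing.Theory Num.Theory.
Local Open Scope ring_scope.

Theorem lemma3 (R : realType) (d k : nat) (hk : (2 <= k)%N) (hd : (2 * k < d)%N)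
  (a b : R) (ha : 0 < a) (hb : 0 < b) (z : 'rV[R]_d)
  (hz : inLam1 k (d - 2 * k) z)
  (hmin : forall u : 'rV[R]_d, inLam1 k (d - 2 * k) u -> phi a b z <= phi a b u) :
  `|dotv z (jv R d)| <= d%:R / (d - 2 * k)%:R /\
  (`|dotv z (jv R d)| = d%:R / (d - 2 * k)%:R ->
     z = ((d - 2 * k)%:R)^-1 *: jv R d \/ z = - (((d - 2 * k)%:R)^-1 *: jv R d)).
Proof.
set N : R := (d - 2 * k)%:R.
set D : R := d%:R.
have HN : 0 < N by rewrite /N ltr0n subn_gt0.
have HD : 0 < D by rewrite /D ltr0n; apply: leq_ltn_trans hd.
have HND : N = D - 2 * k%:R by rewrite /N natrB ?natrM //; apply: ltnW.
pose u : 'rV[R]_d := N^-1 *: jv R d.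
have sumu : \sum_(i < d) u 0 i = D / N.
  rewrite (eq_bigr (fun _ => N^-1)); last by move=> i _; rewrite !mxE mulr1.
  by rewrite sumr_const card_ord -mulr_natr mulrC.
have hu : inLam1 k (d - 2 * k) u.
  split.
    exists (fun _ => 0), 1; apply/rowP => i; rewrite !mxE.
    by rewrite add0r mul1r.
  move=> l [hl hc]; exists 0; rewrite mulr0 add0r.
  rewrite /dotv (eq_bigr (fun i => N^-1 * l 0 i)); last by move=> i _; rewrite !mxE mulr1.
  rewrite -mulr_sumr.
  have -> : \sum_(i < d) l 0 i = \sum_(i < d) (1 - 2 * (l 0 i == -1)%:R).
    apply: eq_bigr => i _; case: (hl i) => ->; last by rewrite eqxx /=; lra.
    rewrite (_ : (1 == -1 :> R) = false) /=; first lra.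
    by apply/negbTE; rewrite -subr_eq0 opprK (_ : 1 + 1 = 2%:R :> R) // pnatr_eq0.
  rewrite sumrB sumr_const card_ord -mulr_sumr.
  have -> : \sum_(i < d) ((l 0 i == -1)%:R : R) = k%:R.
    rewrite (eq_bigr (fun i => if l 0 i == -1 then 1 else 0)); last by move=> i _; case: eqP.
    rewrite -big_mkcond /= sumr_const -hc cardsE //.
  rewrite -/D -HND mulVf //; lra.
have phiu : phi a b u = a * (D / N) ^+ 2.
  rewrite /phi /phi1 /phi2 sumu.
  have -> : u - (D / N / D) *: jv R d = 0.
    apply/rowP => i; rewrite !mxE; field; lra.
  by rewrite /dotv big1 ?mulr0 ?addr0 // => i _; rewrite mxE mul0r.
have sE : dotv z (jv R d) = \sum_(i < d) z 0 i.
  by apply: eq_bigr => i _; rewrite mxE mulr1.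
set s := \sum_(i < d) z 0 i in sE.
pose w := z - (s / D) *: jv R d.
have p2E : phi2 z = \sum_(i < d) w 0 i * w 0 i by [].
have wge : forall i, 0 <= w 0 i * w 0 i by move=> i; rewrite -expr2 sqr_ge0.
have p2ge : 0 <= phi2 z by rewrite p2E sumr_ge0.
have H := hmin u hu; rewrite phiu /phi /phi1 -/s in H.
have Hs2 : `|s| ^+ 2 = s ^+ 2 by rewrite real_normK // num_real.
have Hn0 : 0 <= `|s| by [].
have Hc : 0 < D / N by rewrite divr_gt0.
set c := D / N in H Hc *.
have hbp : 0 <= b * phi2 z by rewrite mulr_ge0 // ltW.
have Hs2c : s ^+ 2 <= c ^+ 2.
  have : a * (s ^+ 2 - c ^+ 2) <= 0 by lra.
  by rewrite pmulr_rle0 // subr_le0.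
rewrite -Hs2 in Hs2c.
rewrite sE; split.
  nra.
move=> Hsc.
have Hsq : s ^+ 2 = c ^+ 2 by rewrite -Hs2 Hsc.
have Hbp0 : b * phi2 z <= 0 by rewrite Hsq in H; lra.
have p20 : phi2 z = 0.
  apply/eqP; rewrite eq_le p2ge andbT.
  by move: Hbp0; rewrite pmulr_rle0.
have w0 : forall i, w 0 i = 0.
  move=> i; have := psumr_eq0P (P := predT) (fun i _ => wge i).
  rewrite -p2E => /(_ p20 i isT) /eqP; rewrite mulf_eq0 orbb => /eqP //.
have zi : forall i, z 0 i = s / D.
  move=> i; have := w0 i; rewrite !mxE mulr1 => /eqP; rewrite subr_eq0 => /eqP //.
case: (lerP 0 s) => hs.
  left; apply/rowP => i; rewrite zi !mxE mulr1.
  have : s = c by rewrite -Hsc ger0_norm.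
  move=> ->; rewrite /c; field; lra.
right; apply/rowP => i; rewrite zi !mxE mulr1.
have : s = - c by rewrite -Hsc ltr0_norm // opprK.
move=> ->; rewrite /c; field; lra.
Qed.
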